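(* If $F:\mathbb{R}\to\mathbb{R}$ is a Darboux function whose set of points of continuity is uncountable, then there is a continuous, non-constant function $g:\mathbb{R}\to\mathbb{R}$ such that $F+g$ is Darboux.
   Context: A function $F:\mathbb{R}\to\mathbb{R}$ is Darboux if the image under $F$ of every interval is an interval. *)

(* Defs.v *)
From Stdlib Require Import Reals.
Open Scope R_scope.

(* A subset of R is an interval iff it is convex (order-convex);
   this includes the empty set, singletons, and unbounded intervals. *)
Definition is_interval (S : R -> Prop) : Prop :=
  forall x y z : R, S x -> S z -> x <= y <= z -> S y.

Definition image (F : R -> R) (S : R -> Prop) : R -> Prop :=
  fun y => exists x : R, S x /\ F x = y.

Definition Darboux (F : R -> R) : Prop :=
  forall S : R -> Prop, is_interval S -> is_interval (image F S).

Definition continuity_points (F : R -> R) : R -> Prop :=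
  fun x => continuity_pt F x.

Definition countable_set (A : R -> Prop) : Prop :=
  exists f : R -> nat, forall x y : R, A x -> A y -> f x = f y -> x = y.

Definition uncountable_set (A : R -> Prop) : Prop := ~ countable_set A.

Definition constant_fun (g : R -> R) : Prop := forall x y : R, g x = g y.

(* Main.v *)
Require Import Defs.
From Stdlib Require Import Reals Lra Lia ZArith Classical ClassicalEpsilon List Cantor.
Open Scope R_scope.

Lemma cnt_sub (A B : R -> Prop) : (forall x, A x -> B x) -> countable_set B -> countable_set A.
Proof. intros H [f Hf]. exists f. intros x y Ax Ay. apply Hf; auto. Qed.

Lemma cnt_union (I : Type) (i0 : I) (e : I -> nat) (A : I -> R -> Prop) (S : R -> Prop) :
  (forall i j, e i = e j -> i = j) ->
  (forall x, S x -> exists i, A i x) ->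
  (forall i, countable_set (fun x => S x /\ A i x)) -> countable_set S.
Proof.
  intros He Hc Hi.
  assert (Hf : forall i, {f : R -> nat | forall x y, (S x /\ A i x) -> (S y /\ A i y) -> f x = f y -> x = y}).
  { intro i. apply constructive_indefinite_description. apply Hi. }
  assert (Hx : forall x, exists i : I, S x -> A i x).
  { intro x. destruct (classic (S x)) as [Sx|nS].
    - destruct (Hc x Sx) as [i Hi']. exists i; auto.
    - exists i0; tauto. }
  set (idx := fun x => proj1_sig (constructive_indefinite_description _ (Hx x))).
  assert (Hidx : forall x, S x -> A (idx x) x).
  { intros x Sx. unfold idx. destruct (constructive_indefinite_description _ (Hx x)); simpl; auto. }
  exists (fun x => Cantor.to_nat (e (idx x), proj1_sig (Hf (idx x)) x)).
  intros x y Sx Sy Heq.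
  apply (f_equal Cantor.of_nat) in Heq. rewrite !Cantor.cancel_of_to in Heq.
  injection Heq as H1 H2. apply He in H1.
  destruct (Hf (idx x)) as [fx Hfx] eqn:E1. simpl in H2.
  destruct (Hf (idx y)) as [fy Hfy] eqn:E2. simpl in H2.
  revert fy Hfy E2 H2. rewrite <- H1. intros fy Hfy E2 H2.
  rewrite E1 in E2. injection E2 as E2. subst fy.
  apply Hfx; auto. rewrite H1. auto.
Qed.

Lemma cnt_union2 (A B : R -> Prop) : countable_set A -> countable_set B ->
  countable_set (fun x => A x \/ B x).
Proof.
  intros HA HB.
  apply (cnt_union bool true (fun b => if b then 1%nat else 0%nat)
     (fun b x => if b then A x else B x)).
  - intros [] []; simpl; congruence.
  - intros x [H|H]; [exists true|exists false]; auto.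
  - intros []; [apply (cnt_sub _ A)|apply (cnt_sub _ B)]; tauto.
Qed.

Lemma cnt_empty (A : R -> Prop) : (forall x, ~ A x) -> countable_set A.
Proof. intros H. exists (fun _ => 0%nat). intros x y Ax. exfalso; eapply H; eauto. Qed.

Lemma two_points (A : R -> Prop) : uncountable_set A -> exists p q, p < q /\ A p /\ A q.
Proof.
  intros HU. apply NNPP; intro HN. apply HU.
  exists (fun _ => 0%nat). intros x y Ax Ay _.
  destruct (Rtotal_order x y) as [h|[h|h]]; auto; exfalso; apply HN; eauto.
Qed.

Definition Iv (i : nat * nat * bool) (y : R) : Prop :=
  let '(m, n, b) := i in
  let M := INR m + 1 in let s := if b then INR n else - INR n in
  (s - 2) / M < y < s / M.

Lemma Iv_cover (x eps : R) : 0 < eps -> exists i, Iv i x /\ forall y, Iv i y -> x - eps < y < x + eps.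
Proof.
  intros He.
  destruct (archimed_cor1 (eps/2)) as [N [HN HN0]]; [lra|].
  set (M := INR N + 1).
  assert (HM : INR N < M) by (unfold M; lra).
  assert (HN1 : 0 < INR N) by (apply lt_0_INR; lia).
  assert (Mp : 0 < M) by lra.
  assert (Hu : / M < eps / 2).
  { apply Rlt_trans with (/ INR N); auto. apply Rinv_lt_contravar; nra. }
  destruct (archimed (x * M)) as [H1 H2].
  set (k := up (x * M)) in *.
  assert (Hk : exists (n : nat) (b : bool), (if b then INR n else - INR n) = IZR k).
  { destruct (Z.le_gt_cases 0 k) as [h|h].
    - exists (Z.to_nat k), true. rewrite INR_IZR_INZ, Z2Nat.id; auto.
    - exists (Z.to_nat (- k)), false. rewrite INR_IZR_INZ, Z2Nat.id by lia.
      rewrite opp_IZR. ring. }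
  destruct Hk as [n [b Hb]].
  exists (N, n, b). unfold Iv. fold M. rewrite Hb.
  assert (E : forall a, a / M = a * / M) by (intros; reflexivity).
  assert (MM : M * / M = 1) by (field; lra).
  assert (Hi : 0 < / M) by (apply Rinv_0_lt_compat; lra).
  rewrite !E. set (u := / M) in *.
  assert (Xe : x = x * M * u) by (rewrite Rmult_assoc, MM; ring).
  assert (A1 : x * M * u < IZR k * u) by (apply Rmult_lt_compat_r; auto).
  assert (A2 : (IZR k - 2) * u < x * M * u) by (apply Rmult_lt_compat_r; lra).
  assert (A3 : IZR k * u <= (x * M + 1) * u) by (apply Rmult_le_compat_r; lra).
  assert (A4 : (x * M + 1) * u = x + u) by (rewrite Rmult_plus_distr_r, <- Xe; ring).
  assert (A5 : (IZR k - 2) * u = IZR k * u - 2 * u) by ring.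
  split.
  - split; lra.
  - intros y [Hy1 Hy2]. split; lra.
Qed.

Definition ie (i : nat * nat * bool) : nat :=
  let '(m, n, b) := i in Cantor.to_nat (Cantor.to_nat (m, n), if b then 1%nat else 0%nat).

Lemma ie_inj i j : ie i = ie j -> i = j.
Proof.
  destruct i as [[m n] b], j as [[m' n'] b']; unfold ie. intro H.
  pose proof (f_equal (fun z => fst (Cantor.of_nat z)) H) as G1.
  pose proof (f_equal (fun z => snd (Cantor.of_nat z)) H) as G2.
  cbv beta in G1, G2. rewrite !Cantor.cancel_of_to in G1, G2. cbn [fst snd] in G1, G2.
  pose proof (f_equal (fun z => fst (Cantor.of_nat z)) G1) as G3.
  pose proof (f_equal (fun z => snd (Cantor.of_nat z)) G1) as G4.
  cbv beta in G3, G4. rewrite !Cantor.cancel_of_to in G3, G4. cbn [fst snd] in G3, G4.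
  subst. destruct b, b'; congruence.
Qed.

Definition ball_set (S : R -> Prop) (p eps : R) : R -> Prop := fun y => S y /\ p - eps < y < p + eps.

Lemma condense (S : R -> Prop) : uncountable_set S ->
  exists p q, p < q /\ S p /\ S q /\
   (forall eps, 0 < eps -> uncountable_set (ball_set S p eps)) /\
   (forall eps, 0 < eps -> uncountable_set (ball_set S q eps)).
Proof.
  intros HU.
  set (P := fun x => forall eps, 0 < eps -> uncountable_set (ball_set S x eps)).
  assert (Hc : countable_set (fun x => S x /\ ~ P x)).
  { apply (cnt_union _ (0%nat,0%nat,true) ie
      (fun i y => Iv i y /\ countable_set (fun z => S z /\ Iv i z))).
    - apply ie_inj.
    - intros x [Sx nP]. unfold P in nP.
      apply not_all_ex_not in nP as [eps nP].
      apply imply_to_and in nP as [He nP]. unfold uncountable_set in nP.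
      apply NNPP in nP.
      destruct (Iv_cover x eps He) as [i [Hi1 Hi2]]. exists i. split; auto.
      eapply cnt_sub; [|exact nP]. intros z [Sz Iz]. split; auto.
    - intros i. destruct (classic (countable_set (fun z => S z /\ Iv i z))) as [h|h].
      + eapply cnt_sub; [|exact h]. intros z [[Sz _] [Iz _]]. auto.
      + apply cnt_empty. intros z [_ [_ c]]. auto. }
  assert (HP : uncountable_set (fun x => S x /\ P x)).
  { intro HC. apply HU. eapply cnt_sub; [|apply (cnt_union2 _ _ HC Hc)].
    intros x Sx. destruct (classic (P x)); auto. }
  destruct (two_points _ HP) as [p [q [h [[Sp Pp] [Sq Pq]]]]].
  exists p, q. auto.
Qed.

Lemma cont_eps (f : R -> R) x : continuity_pt f x ->
  forall eps, 0 < eps -> exists d, 0 < d /\ forall y, Rabs (y - x) < d -> Rabs (f y - f x) < eps.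
Proof.
  intros H eps He. destruct (H eps He) as [d [Hd Hy]]. exists d. split; auto.
  intros y Hyd. destruct (Req_dec x y) as [<-|hne].
  - unfold Rminus. rewrite Rplus_opp_r, Rabs_R0. auto.
  - apply (Hy y). split; [split; [exact I|auto]|exact Hyd].
Qed.

Lemma eps_cont (f : R -> R) x :
  (forall eps, 0 < eps -> exists d, 0 < d /\ forall y, Rabs (y - x) < d -> Rabs (f y - f x) < eps) ->
  continuity_pt f x.
Proof.
  intros H eps He. destruct (H eps He) as [d [Hd Hy]]. exists d. split; auto.
  intros y [_ Hyd]. apply Hy. exact Hyd.
Qed.

Definition good (F : R -> R) (ab : R * R) : Prop :=
  fst ab < snd ab /\ uncountable_set (fun x => continuity_points F x /\ fst ab < x < snd ab).

Definition osc (F : R -> R) (a b e : R) : Prop :=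
  forall y z, a <= y <= b -> a <= z <= b -> Rabs (F y - F z) <= e.

Definition SplitP (F : R -> R) (e : R) (ab : R * R) (q : (R * R) * (R * R)) : Prop :=
  fst ab < fst (fst q) /\ fst (fst q) < snd (fst q) /\ snd (fst q) < fst (snd q) /\
  fst (snd q) < snd (snd q) /\ snd (snd q) < snd ab /\
  good F (fst q) /\ good F (snd q) /\
  osc F (fst (fst q)) (snd (fst q)) e /\ osc F (fst (snd q)) (snd (snd q)) e.

Lemma split_lemma F e ab : 0 < e -> good F ab -> exists q, SplitP F e ab q.
Proof.
  destruct ab as [a b]. intros He [Hab HU]. simpl in *.
  destruct (condense _ HU) as [p [q [hpq [[Cp Ip] [[Cq Iq] [Pp Pq]]]]]].
  destruct (cont_eps F p Cp (e/2)) as [dp [Hdp Hp]]; [lra|].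
  destruct (cont_eps F q Cq (e/2)) as [dq [Hdq Hq]]; [lra|].
  set (r := Rmin (Rmin (dp/2) (dq/2)) (Rmin ((q-p)/3) (Rmin ((p-a)/2) ((b-q)/2)))).
  assert (r1 : r <= dp/2).
  { unfold r. eapply Rle_trans; [apply Rmin_l|apply Rmin_l]. }
  assert (r2 : r <= dq/2).
  { unfold r. eapply Rle_trans; [apply Rmin_l|apply Rmin_r]. }
  assert (r3 : r <= (q-p)/3).
  { unfold r. eapply Rle_trans; [apply Rmin_r|apply Rmin_l]. }
  assert (r4 : r <= (p-a)/2).
  { unfold r. eapply Rle_trans; [apply Rmin_r|]. eapply Rle_trans; [apply Rmin_r|apply Rmin_l]. }
  assert (r5 : r <= (b-q)/2).
  { unfold r. eapply Rle_trans; [apply Rmin_r|]. eapply Rle_trans; [apply Rmin_r|apply Rmin_r]. }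
  assert (r0 : 0 < r).
  { unfold r. repeat apply Rmin_pos; lra. }
  exists ((p - r, p + r), (q - r, q + r)). unfold SplitP; simpl.
  assert (G : forall c, (forall y z, c - r <= y <= c + r -> c - r <= z <= c + r -> Rabs (F y - F c) < e/2 /\ Rabs (F z - F c) < e/2) ->
     osc F (c - r) (c + r) e).
  { intros c Hc y z Hy Hz. destruct (Hc y z Hy Hz) as [A B].
    replace (F y - F z) with ((F y - F c) - (F z - F c)) by ring.
    eapply Rle_trans; [apply Rabs_triang|]. rewrite Rabs_Ropp. lra. }
  repeat split; simpl; try lra.
  - intro HC. apply (Pp r r0). eapply cnt_sub; [|exact HC]. intros x [[Cx _] Hx]. split; auto.
  - intro HC. apply (Pq r r0). eapply cnt_sub; [|exact HC]. intros x [[Cx _] Hx]. split; auto.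
  - apply G. intros y z Hy Hz. split; apply Hp; apply Rabs_def1; lra.
  - apply G. intros y z Hy Hz. split; apply Hq; apply Rabs_def1; lra.
Qed.

Definition ramp (a b x : R) : R := Rmin 1 (Rmax 0 ((x - a) / (b - a))).

Lemma ramp_range a b x : 0 <= ramp a b x <= 1.
Proof. unfold ramp, Rmin, Rmax. repeat destruct Rle_dec; lra. Qed.

Lemma ramp_left a b x : a < b -> x <= a -> ramp a b x = 0.
Proof.
  intros h hx. unfold ramp.
  assert ((x - a) / (b - a) <= 0).
  { assert (0 < / (b - a)) by (apply Rinv_0_lt_compat; lra). unfold Rdiv. nra. }
  unfold Rmin, Rmax. repeat destruct Rle_dec; lra.
Qed.

Lemma ramp_right a b x : a < b -> b <= x -> ramp a b x = 1.
Proof.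
  intros h hx. unfold ramp.
  assert (1 <= (x - a) / (b - a)).
  { apply Rmult_le_reg_r with (b - a); [lra|]. unfold Rdiv. rewrite Rmult_assoc, Rinv_l by lra. lra. }
  unfold Rmin, Rmax. repeat destruct Rle_dec; lra.
Qed.

Lemma ramp_lip a b x y : Rabs (ramp a b x - ramp a b y) <= Rabs (/ (b - a)) * Rabs (x - y).
Proof.
  unfold ramp.
  assert (E : forall u v, Rabs (Rmin 1 (Rmax 0 u) - Rmin 1 (Rmax 0 v)) <= Rabs (u - v)).
  { intros u v. unfold Rmin, Rmax. repeat destruct Rle_dec; split_Rabs; lra. }
  eapply Rle_trans; [apply E|]. rewrite <- Rabs_mult. right. f_equal. unfold Rdiv. ring.
Qed.

Definition NodeOK (nd : list bool -> R * R) : Prop :=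
  (forall s, fst (nd s) < snd (nd s)) /\
  (forall s, fst (nd s) < fst (nd (false :: s)) /\ snd (nd (false :: s)) < fst (nd (true :: s)) /\
             snd (nd (true :: s)) < snd (nd s)).

Fixpoint T (nd : list bool -> R * R) (n : nat) (s : list bool) (x : R) : R :=
  match n with
  | O => ramp (fst (nd s)) (snd (nd s)) x
  | S n' => (T nd n' (false :: s) x + T nd n' (true :: s) x) / 2
  end.

Lemma T_range nd n : forall s x, 0 <= T nd n s x <= 1.
Proof.
  induction n as [|n IH]; intros s x; simpl.
  - apply ramp_range.
  - pose proof (IH (false :: s) x). pose proof (IH (true :: s) x). lra.
Qed.

Lemma T_left nd n : NodeOK nd -> forall s x, x <= fst (nd s) -> T nd n s x = 0.
Proof.
  intros [H1 H2]. induction n as [|n IH]; intros s x hx; simpl.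
  - apply ramp_left; auto.
  - destruct (H2 s) as [A [B C]]. pose proof (H1 (false :: s)). pose proof (H1 (true :: s)).
    rewrite !IH by lra. lra.
Qed.

Lemma T_right nd n : NodeOK nd -> forall s x, snd (nd s) <= x -> T nd n s x = 1.
Proof.
  intros [H1 H2]. induction n as [|n IH]; intros s x hx; simpl.
  - apply ramp_right; auto.
  - destruct (H2 s) as [A [B C]]. pose proof (H1 (false :: s)). pose proof (H1 (true :: s)).
    rewrite !IH by lra. lra.
Qed.

Lemma T_lip nd n : forall s, exists L, 0 <= L /\ forall x y, Rabs (T nd n s x - T nd n s y) <= L * Rabs (x - y).
Proof.
  induction n as [|n IH]; intros s; simpl.
  - exists (Rabs (/ (snd (nd s) - fst (nd s)))). split; [apply Rabs_pos|]. intros; apply ramp_lip.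
  - destruct (IH (false :: s)) as [L0 [HL0 H0]]. destruct (IH (true :: s)) as [L1 [HL1 H1]].
    exists (L0 + L1). split; [lra|]. intros x y.
    pose proof (H0 x y). pose proof (H1 x y). pose proof (Rabs_pos (x - y)).
    replace ((T nd n (false :: s) x + T nd n (true :: s) x) / 2 -
             (T nd n (false :: s) y + T nd n (true :: s) y) / 2)
      with ((T nd n (false :: s) x - T nd n (false :: s) y) / 2 +
            (T nd n (true :: s) x - T nd n (true :: s) y) / 2) by field.
    eapply Rle_trans; [apply Rabs_triang|]. unfold Rdiv. rewrite !Rabs_mult.
    rewrite Rabs_inv, (Rabs_right 2) by lra. nra.
Qed.

Lemma T_step nd n : NodeOK nd -> forall s x, Rabs (T nd (S n) s x - T nd n s x) <= (1/2) ^ n.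
Proof.
  intros HN. destruct HN as [H1 H2] eqn:EH.
  induction n as [|n IH]; intros s x.
  - simpl. pose proof (ramp_range (fst (nd (false :: s))) (snd (nd (false :: s))) x).
    pose proof (ramp_range (fst (nd (true :: s))) (snd (nd (true :: s))) x).
    pose proof (ramp_range (fst (nd s)) (snd (nd s)) x). split_Rabs; lra.
  - change (T nd (S (S n)) s x) with ((T nd (S n) (false :: s) x + T nd (S n) (true :: s) x) / 2).
    change (T nd (S n) s x) with ((T nd n (false :: s) x + T nd n (true :: s) x) / 2).
    destruct (H2 s) as [A [B C]]. pose proof (H1 (false :: s)). pose proof (H1 (true :: s)).
    pose proof (IH (false :: s) x) as I0. pose proof (IH (true :: s) x) as I1.
    change ((1/2)^(S n)) with ((1/2) * (1/2)^n).
    destruct (Rle_dec x (snd (nd (false :: s)))) as [h|h].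
    + rewrite (T_left nd (S n) HN (true :: s) x), (T_left nd n HN (true :: s) x) by lra.
      replace ((T nd (S n) (false :: s) x + 0) / 2 - (T nd n (false :: s) x + 0) / 2)
        with ((T nd (S n) (false :: s) x - T nd n (false :: s) x) * (1/2)) by field.
      rewrite Rabs_mult, (Rabs_right (1/2)) by lra. nra.
    + rewrite (T_right nd (S n) HN (false :: s) x), (T_right nd n HN (false :: s) x) by lra.
      replace ((1 + T nd (S n) (true :: s) x) / 2 - (1 + T nd n (true :: s) x) / 2)
        with ((T nd (S n) (true :: s) x - T nd n (true :: s) x) * (1/2)) by field.
      rewrite Rabs_mult, (Rabs_right (1/2)) by lra. nra.
Qed.

Lemma half_pow_pos n : 0 < (1/2) ^ n.
Proof. apply pow_lt; lra. Qed.

Lemma T_cauchy nd n k : NodeOK nd -> forall s x,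
  Rabs (T nd (n + k) s x - T nd n s x) <= 2 * (1/2)^n - 2 * (1/2)^(n+k).
Proof.
  intros HN s x. induction k as [|k IH].
  - rewrite Nat.add_0_r. unfold Rminus. rewrite Rplus_opp_r, Rabs_R0. lra.
  - rewrite Nat.add_succ_r. pose proof (T_step nd (n + k) HN s x).
    replace (T nd (S (n + k)) s x - T nd n s x) with
      ((T nd (S (n + k)) s x - T nd (n + k) s x) + (T nd (n + k) s x - T nd n s x)) by ring.
    eapply Rle_trans; [apply Rabs_triang|].
    change ((1/2)^(S (n+k))) with ((1/2) * (1/2)^(n+k)). lra.
Qed.

Lemma T_cauchy' nd n m : NodeOK nd -> (n <= m)%nat -> forall s x,
  Rabs (T nd m s x - T nd n s x) <= 2 * (1/2)^n.
Proof.
  intros HN Hnm s x. replace m with (n + (m - n))%nat by lia.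
  pose proof (T_cauchy nd n (m - n) HN s x). pose proof (half_pow_pos (n + (m - n))). lra.
Qed.

Lemma half_pow_small eps : 0 < eps -> exists N, forall n, (N <= n)%nat -> 2 * (1/2)^n < eps.
Proof.
  intros He. destruct (pow_lt_1_zero (1/2) ltac:(rewrite Rabs_right; lra) (eps/2) ltac:(lra)) as [N HN].
  exists N. intros n Hn. specialize (HN n Hn). rewrite Rabs_right in HN.
  - lra.
  - apply Rle_ge, Rlt_le, half_pow_pos.
Qed.

Lemma T_Cauchy nd x : NodeOK nd -> Cauchy_crit (fun n => T nd n nil x).
Proof.
  intros HN eps He. destruct (half_pow_small eps He) as [N HNe]. exists N.
  intros n m Hn Hm. unfold R_dist.
  destruct (Nat.le_ge_cases n m) as [h|h].
  - rewrite Rabs_minus_sym. eapply Rle_lt_trans; [apply T_cauchy'; auto|]. apply HNe; lia.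
  - eapply Rle_lt_trans; [apply T_cauchy'; auto|]. apply HNe; lia.
Qed.

Definition gfun (nd : list bool -> R * R) (HN : NodeOK nd) (x : R) : R :=
  proj1_sig (R_complete _ (T_Cauchy nd x HN)).

Lemma le_eps a b : (forall eps, 0 < eps -> a < b + eps) -> a <= b.
Proof.
  intros H. destruct (Rle_dec a b) as [h|h]; auto. exfalso.
  specialize (H ((a - b)/2) ltac:(lra)). lra.
Qed.

Lemma g_approx nd HN n x : Rabs (gfun nd HN x - T nd n nil x) <= 2 * (1/2)^n.
Proof.
  unfold gfun. destruct (R_complete _ (T_Cauchy nd x HN)) as [l Hl]. simpl.
  apply le_eps. intros eps He. destruct (Hl eps He) as [N HNl].
  specialize (HNl (Nat.max N n) ltac:(lia)). unfold R_dist in HNl.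
  pose proof (T_cauchy' nd n (Nat.max N n) HN ltac:(lia) nil x).
  replace (l - T nd n nil x) with ((l - T nd (Nat.max N n) nil x) + (T nd (Nat.max N n) nil x - T nd n nil x)) by ring.
  eapply Rle_lt_trans; [apply Rabs_triang|]. rewrite Rabs_minus_sym in HNl. lra.
Qed.

Lemma g_cont nd HN : continuity (gfun nd HN).
Proof.
  intros x. apply eps_cont. intros eps He.
  destruct (half_pow_small (eps/3) ltac:(lra)) as [N HNe]. specialize (HNe N (le_n N)).
  destruct (T_lip nd N nil) as [L [HL HLip]].
  exists (eps / 3 / (L + 1)). split.
  { apply Rdiv_lt_0_compat; lra. }
  intros y Hy.
  pose proof (g_approx nd HN N x). pose proof (g_approx nd HN N y). pose proof (HLip y x).
  assert (L * Rabs (y - x) < eps / 3).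
  { assert (Rabs (y - x) * (L + 1) < eps / 3).
    { apply Rmult_lt_reg_r with (/ (L + 1)). apply Rinv_0_lt_compat; lra.
      rewrite Rmult_assoc, Rinv_r, Rmult_1_r by lra. exact Hy. }
    pose proof (Rabs_pos (y - x)). nra. }
  replace (gfun nd HN y - gfun nd HN x) with
   ((gfun nd HN y - T nd N nil y) + (T nd N nil y - T nd N nil x) - (gfun nd HN x - T nd N nil x)) by ring.
  eapply Rle_lt_trans; [apply Rabs_triang|]. rewrite Rabs_Ropp.
  eapply Rle_lt_trans; [apply Rplus_le_compat_r; apply Rabs_triang|]. lra.
Qed.

Lemma abs0 a b : (forall eps, 0 < eps -> Rabs (a - b) < eps) -> a = b.
Proof.
  intros H. apply Rminus_diag_uniq. destruct (Req_dec (a - b) 0) as [h|h]; auto.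
  pose proof (Rabs_pos_lt _ h). specialize (H _ H0). lra.
Qed.

Lemma g_eq_of nd HN x y N : (forall n, (N <= n)%nat -> T nd n nil y = T nd n nil x) ->
  gfun nd HN y = gfun nd HN x.
Proof.
  intros H. apply abs0. intros eps He.
  destruct (half_pow_small (eps/2) ltac:(lra)) as [M HM].
  specialize (HM (Nat.max N M) ltac:(lia)).
  pose proof (g_approx nd HN (Nat.max N M) x). pose proof (g_approx nd HN (Nat.max N M) y).
  rewrite (H (Nat.max N M) ltac:(lia)) in *.
  replace (gfun nd HN y - gfun nd HN x) with
   ((gfun nd HN y - T nd (Nat.max N M) nil x) - (gfun nd HN x - T nd (Nat.max N M) nil x)) by ring.
  eapply Rle_lt_trans; [apply Rabs_triang|]. rewrite Rabs_Ropp. lra.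
Qed.

Lemma g_left nd HN x : x <= fst (nd nil) -> gfun nd HN x = 0.
Proof.
  intros h. apply abs0. intros eps He.
  destruct (half_pow_small eps He) as [M HM]. specialize (HM M (le_n M)).
  pose proof (g_approx nd HN M x). rewrite (T_left nd M HN nil x h) in H. lra.
Qed.

Lemma g_right nd HN x : snd (nd nil) <= x -> gfun nd HN x = 1.
Proof.
  intros h. apply abs0. intros eps He.
  destruct (half_pow_small eps He) as [M HM]. specialize (HM M (le_n M)).
  pose proof (g_approx nd HN M x). rewrite (T_right nd M HN nil x h) in H. lra.
Qed.

Lemma T_loc nd (HN : NodeOK nd) n : forall s x,
  (forall t, length t = n -> ~ (fst (nd (t ++ s)) <= x <= snd (nd (t ++ s)))) ->
  exists d, 0 < d /\ forall k y, Rabs (y - x) < d -> T nd (n + k) s y = T nd (n + k) s x.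
Proof.
  induction n as [|n IH]; intros s x H.
  - specialize (H nil eq_refl). simpl in H.
    destruct (Rle_dec x (fst (nd s))) as [h|h].
    + assert (x < fst (nd s)) by (destruct (Req_dec x (fst (nd s))); [|lra]; exfalso; apply H; destruct HN as [H1 _]; pose proof (H1 s); lra).
      exists (fst (nd s) - x). split; [lra|]. intros k y Hy. simpl.
      rewrite !(T_left nd k HN); auto; try lra. apply Rabs_def2 in Hy. lra.
    + assert (snd (nd s) < x) by lra.
      exists (x - snd (nd s)). split; [lra|]. intros k y Hy. simpl.
      rewrite !(T_right nd k HN); auto; try lra. apply Rabs_def2 in Hy. lra.
  - destruct (IH (false :: s) x) as [d0 [Hd0 E0]].
    { intros t Ht. specialize (H (t ++ false :: nil)). rewrite <- app_assoc in H. apply H.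
      rewrite length_app, Ht. simpl. lia. }
    destruct (IH (true :: s) x) as [d1 [Hd1 E1]].
    { intros t Ht. specialize (H (t ++ true :: nil)). rewrite <- app_assoc in H. apply H.
      rewrite length_app, Ht. simpl. lia. }
    exists (Rmin d0 d1). split; [apply Rmin_pos; auto|]. intros k y Hy.
    simpl. rewrite (E0 k y), (E1 k y); auto.
    + eapply Rlt_le_trans; [exact Hy|apply Rmin_r].
    + eapply Rlt_le_trans; [exact Hy|apply Rmin_l].
Qed.

Lemma g_loc nd HN n x :
  (forall t, length t = n -> ~ (fst (nd t) <= x <= snd (nd t))) ->
  exists d, 0 < d /\ forall y, Rabs (y - x) < d -> gfun nd HN y = gfun nd HN x.
Proof.
  intros H. destruct (T_loc nd HN n nil x) as [d [Hd E]].
  { intros t Ht. rewrite app_nil_r. auto. }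
  exists d. split; auto. intros y Hy. apply (g_eq_of nd HN x y n).
  intros m Hm. replace m with (n + (m - n))%nat by lia. auto.
Qed.

Definition LDprop (h : R -> R) : Prop :=
  forall x, continuity_pt h x \/ exists d, 0 < d /\ forall u v c, x - d < u -> u < v -> v < x + d ->
     (h u < c < h v \/ h v < c < h u) -> exists z, u <= z <= v /\ h z = c.

Lemma core (h : R -> R) : LDprop h -> forall p q c, p < q -> h p < c < h q ->
  exists z, p <= z <= q /\ h z = c.
Proof.
  intros HL p q c hpq [hp hq]. apply NNPP. intro HN.
  assert (Hne : forall z, p <= z <= q -> h z <> c) by (intros z Hz E; apply HN; eauto).
  set (E := fun z => p <= z <= q /\ forall w, p <= w <= z -> h w < c).
  destruct (completeness E) as [s [Hs1 Hs2]].
  { exists q. intros z [Hz _]. lra. }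
  { exists p. split; [lra|]. intros w Hw. replace w with p by lra. auto. }
  assert (ps : p <= s) by (apply Hs1; split; [lra|]; intros w Hw; replace w with p by lra; auto).
  assert (sq : s <= q) by (apply Hs2; intros z [Hz _]; lra).
  assert (Hleft : forall w, p <= w < s -> h w < c).
  { intros w Hw. apply NNPP. intro Hw'.
    assert (Hub : forall z, E z -> z <= w).
    { intros z [Hz Hz']. destruct (Rle_dec z w) as [r|r]; auto. exfalso. apply Hw'. apply Hz'. lra. }
    specialize (Hs2 w Hub). lra. }
  destruct (HL s) as [Hc|[d [Hd HD]]].
  - pose proof (Hne s ltac:(lra)) as hs.
    destruct (Rlt_dec (h s) c) as [lt|nlt].
    + assert (s < q) by (destruct (Req_dec s q); [subst; lra|lra]).
      destruct (cont_eps h s Hc (c - h s) ltac:(lra)) as [d [Hd Hdd]].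
      set (z := Rmin (s + d/2) q).
      assert (zs : s < z) by (unfold z; apply Rmin_glb_lt; lra).
      assert (zq : z <= q) by (unfold z; apply Rmin_r).
      assert (zd : z <= s + d/2) by (unfold z; apply Rmin_l).
      assert (E z).
      { split; [lra|]. intros w Hw. destruct (Rlt_dec w s); [apply Hleft; lra|].
        specialize (Hdd w). apply Rabs_def2 in Hdd as [A B]; [lra|]. apply Rabs_def1; lra. }
      specialize (Hs1 z H0). lra.
    + assert (c < h s) by lra.
      assert (p < s) by (destruct (Req_dec p s); [subst; lra|lra]).
      destruct (cont_eps h s Hc (h s - c) ltac:(lra)) as [d [Hd Hdd]].
      set (w := Rmax (s - d/2) p).
      assert (ws : w < s) by (unfold w; apply Rmax_lub_lt; lra).
      assert (wp : p <= w) by (unfold w; apply Rmax_r).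
      assert (wd : s - d/2 <= w) by (unfold w; apply Rmax_l).
      pose proof (Hleft w ltac:(lra)).
      specialize (Hdd w). apply Rabs_def2 in Hdd as [A B]; [lra|]. apply Rabs_def1; lra.
  - set (u := Rmax p (s - d/2)). set (v := Rmin q (s + d/2)).
    assert (u1 : p <= u) by apply Rmax_l. assert (u2 : s - d/2 <= u) by apply Rmax_r.
    assert (u3 : u <= s) by (apply Rmax_lub; lra).
    assert (v1 : v <= q) by apply Rmin_l. assert (v2 : v <= s + d/2) by apply Rmin_r.
    assert (v3 : s <= v) by (apply Rmin_glb; lra).
    assert (hu : h u < c).
    { destruct (Req_dec u s) as [e|e].
      - assert (u = p).
        { unfold u in *. unfold Rmax in *. destruct Rle_dec; lra. }
        rewrite H; auto.
      - apply Hleft; lra. }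
    assert (uv : u < v).
    { destruct (Req_dec u v) as [e|e]; [|lra]. exfalso.
      assert (u = p) by (unfold u in *; unfold Rmax in *; destruct Rle_dec; lra).
      assert (v = q) by (unfold v in *; unfold Rmin in *; destruct Rle_dec; lra). lra. }
    assert (Hall : forall w, u < w <= v -> h w < c).
    { intros w Hw. destruct (Rlt_dec (h w) c) as [r|r]; auto. exfalso.
      assert (c < h w) by (pose proof (Hne w ltac:(lra)); lra).
      destruct (HD u w c) as [z [Hz1 Hz2]]; try lra.
      apply (Hne z); auto; lra. }
    assert (hv : h v < c) by (apply Hall; lra).
    assert (vq : v < q) by (destruct (Req_dec v q) as [e|e]; [rewrite e in hv; lra|lra]).
    assert (vs : v = s + d/2) by (unfold v in *; unfold Rmin in *; destruct Rle_dec; lra).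
    assert (E v).
    { split; [lra|]. intros w Hw. destruct (Rle_dec w u) as [r|r].
      - destruct (Req_dec w u) as [e|e]; [rewrite e; auto|]. apply Hleft; lra.
      - apply Hall; lra. }
    specialize (Hs1 v H). lra.
Qed.

Lemma LD_opp h : LDprop h -> LDprop (fun x => - h x).
Proof.
  intros H x. destruct (H x) as [Hc|[d [Hd HD]]].
  - left. apply (continuity_pt_opp h x Hc).
  - right. exists d. split; auto. intros u v c H1 H2 H3 H4.
    destruct (HD u v (- c)) as [z [Hz1 Hz2]]; auto; try lra.
    exists z. split; auto. lra.
Qed.

Lemma LD_darboux h : LDprop h -> Darboux h.
Proof.
  intros H S HS y1 y2 y3 [x1 [S1 E1]] [x3 [S3 E3]] [A B]. subst.
  destruct (Req_dec y2 (h x1)) as [e|e]; [exists x1; auto|].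
  destruct (Req_dec y2 (h x3)) as [e'|e']; [exists x3; auto|].
  destruct (Rtotal_order x1 x3) as [lt|[eq|gt]].
  - destruct (core h H x1 x3 y2 lt ltac:(lra)) as [z [Hz1 Hz2]].
    exists z. split; auto. eapply HS; [exact S1|exact S3|exact Hz1].
  - subst. lra.
  - destruct (core _ (LD_opp h H) x3 x1 (- y2) gt ltac:(lra)) as [z [Hz1 Hz2]].
    exists z. split; [eapply HS; [exact S3|exact S1|exact Hz1]|lra].
Qed.

Lemma split_ex F (n : nat) (ab : R * R) :
  exists q, good F ab -> SplitP F (/ (INR n + 1)) ab q.
Proof.
  destruct (classic (good F ab)) as [h|h].
  - assert (0 < / (INR n + 1)) by (apply Rinv_0_lt_compat; pose proof (pos_INR n); lra).
    destruct (split_lemma F _ ab H h) as [q Hq]. exists q. auto.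
  - exists ((0,0),(0,0)). tauto.
Qed.

Definition sp F n ab := proj1_sig (constructive_indefinite_description _ (split_ex F n ab)).

Lemma sp_spec F n ab : good F ab -> SplitP F (/ (INR n + 1)) ab (sp F n ab).
Proof. unfold sp. destruct (constructive_indefinite_description _ _); simpl; auto. Qed.

Fixpoint node F (root : R * R) (s : list bool) : R * R :=
  match s with
  | nil => root
  | b :: s' => let q := sp F (length s') (node F root s') in if b then snd q else fst q
  end.

Lemma node_good F root : good F root -> forall s, good F (node F root s).
Proof.
  intros Hr. induction s as [|b s IH]; simpl; auto.
  pose proof (sp_spec F (length s) _ IH) as Hs. unfold SplitP in Hs. destruct b; tauto.
Qed.

Lemma node_ok F root : good F root -> NodeOK (node F root).
Proof.
  intros Hr. split.
  - intros s. apply (node_good F root Hr s).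
  - intros s. simpl. pose proof (sp_spec F (length s) _ (node_good F root Hr s)) as Hs.
    unfold SplitP in Hs. lra.
Qed.

Lemma node_osc F root : good F root -> forall b s,
  osc F (fst (node F root (b :: s))) (snd (node F root (b :: s))) (/ (INR (length s) + 1)).
Proof.
  intros Hr b s. simpl. pose proof (sp_spec F (length s) _ (node_good F root Hr s)) as Hs.
  unfold SplitP in Hs. destruct b; tauto.
Qed.

Lemma K_cont F root : good F root -> forall x,
  (forall n, exists t, length t = n /\ fst (node F root t) <= x <= snd (node F root t)) ->
  continuity_pt F x.
Proof.
  intros Hr x H. apply eps_cont. intros eps He.
  destruct (archimed_cor1 eps He) as [N [HN HN0]].
  destruct (H (S (S N))) as [t [Ht Hx]].
  destruct t as [|b1 [|b2 t]]; simpl in Ht; try lia.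
  injection Ht as Ht.
  destruct (node_ok F root Hr) as [_ H2].
  set (P := node F root (b2 :: t)).
  assert (Hin : fst P < x < snd P).
  { destruct (H2 (b2 :: t)) as [A [B C]]. fold P in A, B, C.
    pose proof (node_ok F root Hr) as [H1 _]. pose proof (H1 (false :: b2 :: t)). pose proof (H1 (true :: b2 :: t)).
    destruct b1; lra. }
  pose proof (node_osc F root Hr b2 t) as Ho. fold P in Ho. rewrite Ht in Ho.
  assert (/ (INR N + 1) < eps).
  { eapply Rlt_trans; [|exact HN]. apply Rinv_lt_contravar; [|lra].
    assert (0 < INR N) by (apply lt_0_INR; lia). nra. }
  exists (Rmin (x - fst P) (snd P - x)). split; [apply Rmin_pos; lra|].
  intros y Hy. apply Rabs_def2 in Hy as [Y1 Y2].
  assert (Rmin (x - fst P) (snd P - x) <= x - fst P) by apply Rmin_l.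
  assert (Rmin (x - fst P) (snd P - x) <= snd P - x) by apply Rmin_r.
  eapply Rle_lt_trans; [apply Ho; lra|]. auto.
Qed.

Theorem mainTheorem7 (F : R -> R) :
  Darboux F ->
  uncountable_set (continuity_points F) ->
  exists g : R -> R,
    continuity g /\ ~ constant_fun g /\ Darboux (fun x => F x + g x).
Proof.
  intros HD HU.
  destruct (condense _ HU) as [p [_ [_ [Cp [_ [Pp _]]]]]].
  set (root := (p - 1, p + 1)).
  assert (Hr : good F root).
  { split; simpl; [lra|]. intro HC. apply (Pp 1 ltac:(lra)). eapply cnt_sub; [|exact HC].
    intros x [Cx Hx]. split; auto. }
  set (nd := node F root). pose proof (node_ok F root Hr) as HN.
  exists (gfun nd HN). split; [|split].
  - apply g_cont.
  - intros Hc. specialize (Hc (fst (nd nil)) (snd (nd nil))).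
    rewrite g_left, g_right in Hc; try lra.
  - apply LD_darboux. intros x.
    destruct (classic (forall n, exists t, length t = n /\ fst (nd t) <= x <= snd (nd t))) as [K|K].
    + left. apply continuity_pt_plus; [apply (K_cont F root Hr x K)|apply g_cont].
    + right. apply not_all_ex_not in K as [n K].
      destruct (g_loc nd HN n x) as [d [Hd Hg]].
      { intros t Ht Hx. apply K. exists t. auto. }
      exists d. split; auto. intros u v c Hu Huv Hv Hc.
      assert (Gu : gfun nd HN u = gfun nd HN x) by (apply Hg; apply Rabs_def1; lra).
      assert (Gv : gfun nd HN v = gfun nd HN x) by (apply Hg; apply Rabs_def1; lra).
      rewrite Gu, Gv in Hc.
      set (S := fun z => u <= z <= v).
      assert (HS : is_interval S) by (intros a b c' [A1 A2] [B1 B2] [C1 C2]; split; lra).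
      assert (Hz : exists z, S z /\ F z = c - gfun nd HN x).
      { destruct (Rlt_dec (F u) (F v)) as [r|r].
        - apply (HD S HS (F u) (c - gfun nd HN x) (F v)).
          + exists u; split; [split; lra|auto].
          + exists v; split; [split; lra|auto].
          + lra.
        - apply (HD S HS (F v) (c - gfun nd HN x) (F u)).
          + exists v; split; [split; lra|auto].
          + exists u; split; [split; lra|auto].
          + lra. }
      destruct Hz as [z [Sz Fz]]. exists z. split; auto.
      rewrite (Hg z); [lra|]. unfold S in Sz. apply Rabs_def1; lra.
Qed.
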